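(* Let $u\in U$ and let $\Phi$ be a continuous Young function satisfying the $\Delta_2$ condition. Then: (1) for all $f\in wL_\Phi^u(\mathbb{R}^n)$ and all $x\in\mathbb{R}^n$, we have $L_xf\in wL_\Phi^u(\mathbb{R}^n)$ and $\|L_xf\|_{wL_\Phi^u(\mathbb{R}^n)} \le u(x)\|f\|_{wL_\Phi^u(\mathbb{R}^n)}$; (2) if $f\in wL_\Phi^u(\mathbb{R}^n)$ and $f\neq 0$, then there is a constant $C>0$ (depending on $f$) such that $\frac{u(x)}{C} \le \|L_xf\|_{wL_\Phi^u(\mathbb{R}^n)} \le C u(x)$ for all $x \in \mathbb{R}^n$.
   Context: $U$ denotes the set of all functions $u:\mathbb{R}^n\to(0,\infty)$ such that $u(x+y)\le u(x)u(y)$ for all $x,y\in\mathbb{R}^n$. A Young function is a function $\Phi:[0,\infty)\to[0,\infty)$ that is convex, left-continuous, satisfies $\lim_{t\to0}\Phi(t)=0=\Phi(0)$ and $\lim_{t\to\infty}\Phi(t)=\infty$. $\Phi$ satisfies the $\Delta_2$ condition if there is $K>0$ with $\Phi(2t)\le K\Phi(t)$ for all $t\ge0$. For a Young function $\Phi$ and a weight $u:\mathbb{R}^n\to(0,\infty)$, the weighted weak Orlicz space $wL_\Phi^u(\mathbb{R}^n)$ is the set of measurable $f:\mathbb{R}^n\to\mathbb{R}$ with $\|f\|_{wL_\Phi^u(\mathbb{R}^n)} := \inf\{ b>0 : \sup_{t>0} \Phi(t)\,|\{x\in\mathbb{R}^n : |u(x)f(x)|/b > t\}| \le 1\} < \infty$,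 where $|\cdot|$ is Lebesgue measure. For $x\in\mathbb{R}^n$, the translation $L_xf$ is defined by $L_xf(y):=f(y-x)$. *)

(* Defs.v *)
(* R^n is modelled as 'rV[R]_n over R : realType. *)
From HB Require Import structures.
From mathcomp Require Import all_boot all_order all_algebra.
From mathcomp Require Import all_classical all_reals all_analysis.
Set Implicit Arguments. Unset Strict Implicit. Unset Printing Implicit Defensive.
Import Order.TTheory GRing.Theory Num.Theory.
Import numFieldNormedType.Exports.
Local Open Scope classical_set_scope.
Local Open Scope ring_scope.

Section Defs.
Variables (R : realType) (n : nat).

Definition box (a b : 'rV[R]_n) : set 'rV[R]_n :=
  [set x | forall i : 'I_n, a ord0 i <= x ord0 i < b ord0 i].

Definition box_vol (a b : 'rV[R]_n) : \bar R :=
  (\prod_(i < n) Num.max (b ord0 i - a ord0 i) 0)%:E.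

(* Lebesgue (outer) measure on R^n: infimum of the total volume of
   countable covers by boxes.  On Lebesgue measurable sets it is the
   Lebesgue measure |.| . *)
Definition leb_outer (A : set 'rV[R]_n) : \bar R :=
  ereal_inf [set e | exists a b : nat -> 'rV[R]_n,
     A `<=` \bigcup_k box (a k) (b k) /\
     e = (\sum_(0 <= k <oo) box_vol (a k) (b k))%E].

Definition leb_measurable (A : set 'rV[R]_n) : Prop :=
  forall E : set 'rV[R]_n,
    leb_outer E = (leb_outer (E `&` A) + leb_outer (E `&` ~` A))%E.

Definition leb_measurable_fun (f : 'rV[R]_n -> R) : Prop :=
  forall t : R, leb_measurable [set x | t < f x].

Definition weightU (u : 'rV[R]_n -> R) : Prop :=
  (forall x, 0 < u x) /\ (forall x y, u (x + y) <= u x * u y).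

Definition transl (x : 'rV[R]_n) (f : 'rV[R]_n -> R) : 'rV[R]_n -> R :=
  fun y => f (y - x).

(* Weak Orlicz (quasi)norm, as an extended real (inf over the empty set
   is +oo). *)
Definition wOrlicz_norm (Phi : R -> R) (u f : 'rV[R]_n -> R) : \bar R :=
  ereal_inf [set b%:E | b in [set b : R | 0 < b /\
     (ereal_sup [set ((Phi t)%:E *
                      leb_outer [set x | (t < `|u x * f x| / b)%R])%E
                 | t in [set t : R | (0 < t)%R]] <= 1%E)%E]].

Definition in_wOrlicz (Phi : R -> R) (u f : 'rV[R]_n -> R) : Prop :=
  leb_measurable_fun f /\ (wOrlicz_norm Phi u f < +oo)%E.
End Defs.

(* Young functions, considered on [0, +oo). *)
Definition young_fun (R : realType) (Phi : R -> R) : Prop :=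
  [/\ (forall t, 0 <= t -> 0 <= Phi t),
      (forall s t l, 0 <= s -> 0 <= t -> 0 <= l <= 1 ->
          Phi (l * s + (1 - l) * t) <= l * Phi s + (1 - l) * Phi t),
      (forall t, 0 < t -> Phi s @[s --> t^'-] --> Phi t),
      Phi 0 = 0 /\ Phi s @[s --> 0^'+] --> 0
    & Phi s @[s --> +oo] --> +oo].

Definition cont_on_nonneg (R : realType) (Phi : R -> R) : Prop :=
  {within `[0, +oo[, continuous Phi}.

Definition Delta2 (R : realType) (Phi : R -> R) : Prop :=
  exists K : R, 0 < K /\ forall t, 0 <= t -> Phi (2 * t) <= K * Phi t.

(* Main.v *)
Require Import Defs.
From HB Require Import structures.
From mathcomp Require Import all_boot all_order all_algebra.
From mathcomp Require Import all_classical all_reals all_analysis.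
From mathcomp Require Import ring lra.
Import Order.TTheory GRing.Theory Num.Theory.
Local Open Scope classical_set_scope.
Local Open Scope ring_scope.
Set Implicit Arguments. Unset Strict Implicit. Unset Printing Implicit Defensive.

Section Aux.
Variables (R : realType) (n : nat).
Local Open Scope ereal_scope.

Lemma box_vol_ge0 (a b : 'rV[R]_n) : 0 <= box_vol a b.
Proof.
rewrite /box_vol lee_fin; apply: prodr_ge0 => i _.
by rewrite le_max lexx orbT.
Qed.

Lemma leb_outer_ge0 (A : set 'rV[R]_n) : 0 <= leb_outer A.
Proof.
apply: le_ereal_inf_tmp => _ [a [b [_ ->]]].
by apply: nneseries_ge0 => k _ _; exact: box_vol_ge0.
Qed.

Lemma le_leb_outer (A B : set 'rV[R]_n) : A `<=` B -> leb_outer A <= leb_outer B.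
Proof.
move=> AB; apply: ereal_inf_le_tmp => _ [a [b [cov ->]]].
by exists a, b; split => //; exact: subset_trans cov.
Qed.

Lemma leb_outer_transl_le (P : set 'rV[R]_n) (x : 'rV[R]_n) :
  leb_outer [set y | P (y - x)%R] <= leb_outer P.
Proof.
apply: ereal_inf_le_tmp => _ [a [b [cov ->]]].
exists (fun k => a k + x)%R, (fun k => b k + x)%R; split.
  move=> y /= /cov [k _ hk]; exists k => // i.
  by move: (hk i); rewrite !mxE => /andP[h1 h2]; rewrite -lerBrDr -ltrBlDr h1 h2.
apply: eq_eseriesr => k _; rewrite /box_vol; congr (_%:E).
by apply: eq_bigr => i _; rewrite !mxE; congr (Num.max _ _); rewrite opprD addrACA subrr addr0.
Qed.

Lemma leb_outer_transl (P : set 'rV[R]_n) (x : 'rV[R]_n) :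
  leb_outer [set y | P (y - x)%R] = leb_outer P.
Proof.
apply/eqP; rewrite eq_le leb_outer_transl_le /=.
have h := leb_outer_transl_le [set w | P (w - x)%R] (- x)%R.
have e : [set y | [set w | P (w - x)%R] (y - - x)%R] = P.
  by apply/seteqP; split => y /=; rewrite opprK addrK.
by rewrite e in h.
Qed.


Lemma leb_measurable_transl (P : set 'rV[R]_n) x :
  leb_measurable P -> leb_measurable [set y | P (y - x)%R].
Proof.
move=> mP E.
have tr (Q : set 'rV[R]_n) : leb_outer Q = leb_outer [set z | Q (z + x)%R].
  by rewrite -[RHS](leb_outer_transl _ x); congr leb_outer; apply/seteqP; split => y /=; rewrite subrK.
rewrite (tr E) (mP _) (tr (E `&` _)) (tr (E `&` ~` _)).
by f_equal; f_equal; apply/seteqP; split => z /=; rewrite addrK.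
Qed.

Lemma leb_outer_sigma (A : (set 'rV[R]_n)^nat) :
  leb_outer (\bigcup_k A k) <= \sum_(i <oo) leb_outer (A i).
Proof.
have [[i ioo]|] := pselect (exists i, leb_outer (A i) = +oo).
  rewrite (eseries_pinfty _ _ ioo) ?leey// => k _.
  by rewrite -ltNye (lt_le_trans _ (leb_outer_ge0 _)).
rewrite -forallNE => Aoo.
suff add2e (e : {posnum R}) :
    leb_outer (\bigcup_n A n) <= \sum_(i <oo) leb_outer (A i) + e%:num%:E.
  by apply/lee_addgt0Pr => _/posnumP[].
rewrite (le_trans _ (epsilon_trick _ _ _))//; last first.
  by move=> k; exact: leb_outer_ge0.
pose P k (G : (nat -> 'rV[R]_n) * (nat -> 'rV[R]_n)) :=
  A k `<=` \bigcup_j box (G.1 j) (G.2 j) /\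
  \sum_(j <oo) box_vol (G.1 j) (G.2 j) <= leb_outer (A k) + (e%:num / (2 ^ k.+1)%:R)%:E.
have [G PG] : {G : nat -> (nat -> 'rV[R]_n) * (nat -> 'rV[R]_n) & forall k, P k (G k)}.
  apply: (@choice _ _ P) => k; rewrite /P /leb_outer.
  set S := (X in ereal_inf X); move infS : (ereal_inf S) => iS.
  case: iS infS => [r Sr|Soo|Soo].
  - have en1 : (0 < e%:num / (2 ^ k.+1)%:R)%R by [].
    have /(lb_ereal_inf_adherent en1) : ereal_inf S \is a fin_num by rewrite Sr.
    move=> [_ [a [b [AnB ->]]] xS].
    by exists (a, b); split => //; rewrite -Sr; exact/ltW.
  - by have := Aoo k; rewrite /leb_outer Soo.
  - suff : lbound S 0 by move/le_ereal_inf_tmp; rewrite Soo.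
    by move=> /= _ [a [b [_ ->]]]; apply: nneseries_ge0 => *; exact: box_vol_ge0.
pose vol (p : nat * nat) := box_vol ((G p.1).1 p.2) ((G p.1).2 p.2).
have vol_ge0 p : 0 <= vol p by exact: box_vol_ge0.
apply: (@le_trans _ _ (\esum_(i in setT) vol i)).
  rewrite /leb_outer; apply: ereal_inf_lbound => /=.
  have /card_esym/ppcard_eqP[f] := card_nat2.
  exists (fun i => (G (f i).1).1 (f i).2), (fun i => (G (f i).1).2 (f i).2).
  split.
    move=> t [i _ /(PG i).1 [j _ Bijt]]; exists (f^-1%FUN (i, j)) => //=.
    by rewrite invK ?inE.
  rewrite -(esum_pred_image vol _ xpredT) ?[fun=> _]set_true//.
  have -> : [set f x | x in (fun=> true)] = [set: nat * nat].
    by apply/seteqP; split => // p _; exists (f^-1%FUN p) => //; rewrite invK ?inE.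
  by [].
rewrite (_ : esum _ _ = \sum_(i <oo) \sum_(j <oo ) vol (i, j)); last first.
  pose J : nat -> set (nat * nat) := fun i => [set (i, j) | j in setT].
  rewrite (_ : setT = \bigcup_k J k); last first.
    by rewrite predeqE => -[a b]; split => // _; exists a => //; exists b.
  rewrite esum_bigcupT /=; last 2 first.
    - apply/trivIsetP => i j _ _ ij.
      rewrite predeqE => -[k m] /=; split => //= -[] [_] _ [<-{k} _].
      by move=> [m' _] [] /esym/eqP; rewrite (negbTE ij).
    - by move=> /= [k m]; exact: vol_ge0.
  rewrite -(image_id [set: nat]) -fun_true esum_pred_image//; last first.
    by move=> k _; exact: esum_ge0.
  apply: eq_eseriesr => /= j _.
  rewrite -(esum_pred_image vol (pair j) predT)//=; last first.
    by move=> ? ? _ _; exact: (@can_inj _ _ _ snd).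
  by congr esum; rewrite predeqE => -[a b]; split; move=> [i _ <-]; exists i.
apply: lee_lim.
- apply: is_cvg_nneseries => k *.
  by apply: nneseries_ge0 => m *; exact: (vol_ge0 (k, m)).
- by apply: is_cvg_nneseries => k *; apply: adde_ge0 => //; exact: leb_outer_ge0.
- by near=> k; apply: lee_sum => i _; exact: (PG i).2.
Unshelve. all: by end_near. Qed.


Lemma leb_outer_null_union (A : (set 'rV[R]_n)^nat) :
  (forall k, leb_outer (A k) = 0) -> leb_outer (\bigcup_k A k) = 0.
Proof.
move=> hA; apply/eqP; rewrite eq_le leb_outer_ge0 andbT.
apply: le_trans (leb_outer_sigma A) _.
by rewrite eseries0.
Qed.

Lemma sup_transl (Phi : R -> R) (u f : 'rV[R]_n -> R) x b :
  weightU u -> (forall t, (0 < t)%R -> (0 <= Phi t)%R) -> (0 < b)%R ->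
  ereal_sup [set (Phi t)%:E * leb_outer [set y | (t < `|u y * f y| / b)%R]
                 | t in [set t : R | (0 < t)%R]] <= 1 ->
  ereal_sup [set (Phi t)%:E * leb_outer [set y | (t < `|u y * transl x f y| / (b * u x))%R]
                 | t in [set t : R | (0 < t)%R]] <= 1.
Proof.
move=> [u0 usub] Phi0 b0 hb; apply: ge_ereal_sup => _ [t t0 <-].
apply: le_trans hb; apply: (@le_trans _ _ ((Phi t)%:E * leb_outer [set y | (t < `|u y * f y| / b)%R])); last by apply: ereal_sup_ubound; exists t.
rewrite lee_wpmul2l ?lee_fin ?Phi0 //.
rewrite -[X in _ <= X](leb_outer_transl _ x); apply: le_leb_outer => y /=.
rewrite /transl => /lt_le_trans; apply.
rewrite !normrM [`|u y|%R]gtr0_norm// [`|u (y - x)%R|%R]gtr0_norm//.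
have ux0 := u0 x; have uy0 := u0 (y - x)%R.
have h : (u y <= u (y - x) * u x)%R by have := usub (y - x)%R x; rewrite subrK.
rewrite (_ : (u (y - x) * `|f (y - x)| / b = (u (y - x) * u x) * `|f (y - x)| / (b * u x))%R); last first.
  by field; apply/andP; split; rewrite gt_eqF.
rewrite ler_pM2r ?invr_gt0 ?mulr_gt0 //.
by rewrite ler_wpM2r.
Qed.


Lemma norm_transl_le (Phi : R -> R) (u f : 'rV[R]_n -> R) x :
  weightU u -> (forall t, (0 < t)%R -> (0 <= Phi t)%R) ->
  wOrlicz_norm Phi u (transl x f) <= (u x)%:E * wOrlicz_norm Phi u f.
Proof.
move=> hu Phi0; have ux0 := hu.1 x.
rewrite -lee_pdivrMl //; apply: le_ereal_inf_tmp => _ [b [b0 hb] <-].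
rewrite lee_pdivrMl //; apply: ereal_inf_lbound; exists (b * u x)%R.
  by split; [exact: mulr_gt0 | exact: sup_transl].
by rewrite EFinM muleC.
Qed.

Lemma wnorm_ge0 (Phi : R -> R) (u f : 'rV[R]_n -> R) : 0 <= wOrlicz_norm Phi u f.
Proof. by apply: le_ereal_inf_tmp => _ [b [b0 _] <-]; rewrite lee_fin ltW. Qed.

Lemma wnorm_pos (Phi : R -> R) (u f : 'rV[R]_n -> R) :
  (forall x, (0 < u x)%R) -> young_fun Phi -> leb_outer [set x | f x != 0%R] != 0 ->
  0 < wOrlicz_norm Phi u f.
Proof.
move=> u0 [Phi0 _ _ _ Phioo] hf.
rewrite lt_neqAle wnorm_ge0 andbT; apply/negP => /eqP N0.
move: hf; apply/negP; rewrite negbK; apply/eqP.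
suff hs : forall s : R, (0 < s)%R -> leb_outer [set y | (s < `|u y * f y|)%R] = 0.
  apply/eqP; rewrite eq_le leb_outer_ge0 andbT.
  rewrite -(@leb_outer_null_union (fun k => [set y | ((k.+1%:R)^-1 < `|u y * f y|)%R])); last first.
    by move=> k; apply: hs; rewrite invr_gt0.
  apply: le_leb_outer => y /= fy0.
  have z0 : (0 < `|u y * f y|)%R by rewrite normr_gt0 mulf_neq0 // gt_eqF.
  exists (Num.trunc (`|u y * f y|^-1)%R) => //=.
  rewrite invf_plt // ?posrE ?ltr0Sn //; exact: truncnS_gt.
move=> s s0; apply/eqP; rewrite eq_le leb_outer_ge0 andbT leNgt; apply/negP => Lpos.
set L := leb_outer _ in Lpos *.
have [T hT] : exists T : R, forall t, (T < t)%R -> 1 < (Phi t)%:E * L.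
  move: Lpos; case: L => [r| |] r0; rewrite ?lte_fin in r0.
  - have /cvgryPge/(_ (2 / r)%R) [M [Mr HM]] := Phioo.
    exists M => t /HM h; rewrite -EFinM lte_fin.
    apply: (lt_le_trans _ (ler_wpM2r (ltW r0) h)).
    by rewrite divfK ?gt_eqF //; lra.
  - have /cvgryPge/(_ 1%R) [M [Mr HM]] := Phioo.
    exists M => t /HM h; rewrite gt0_muley ?ltry // lte_fin.
    exact: lt_le_trans ltr01 h.
  - by [].
have e0 : (0 < s / (`|T| + 1))%R by rewrite divr_gt0 // ltr_wpDl.
have : wOrlicz_norm Phi u f < (s / (`|T| + 1))%:E by rewrite -N0 lte_fin.
move/ereal_inf_lt => [_ [b [b0 hb] <-]]; rewrite lte_fin => bs.
have tT : (T < s / b)%R.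
  rewrite ltr_pdivlMr //; move: bs; rewrite ltr_pdivlMr ?ltr_wpDl // => bs.
  have := ler_norm T; nra.
have := hT _ tT.
have : (Phi (s / b))%:E * leb_outer [set y | (s / b < `|u y * f y| / b)%R] <= 1.
  apply: le_trans hb; apply: ereal_sup_ubound; exists (s / b)%R => //=.
  exact: divr_gt0.
have -> : [set y | (s / b < `|u y * f y| / b)%R] = [set y | (s < `|u y * f y|)%R].
  by apply/seteqP; split => y /=; rewrite ltr_pM2r // invr_gt0.
by move=> /le_lt_trans h /h; rewrite ltxx.
Qed.


Lemma norm_cmp (Phi : R -> R) (v g w h : 'rV[R]_n -> R) x a :
  (0 < a)%R -> (forall t, (0 < t)%R -> (0 <= Phi t)%R) ->
  (forall y, a * `|v (y - x) * g (y - x)| <= `|w y * h y|)%R ->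
  a%:E * wOrlicz_norm Phi v g <= wOrlicz_norm Phi w h.
Proof.
move=> a0 Phi0 hvw.
apply: le_ereal_inf_tmp => _ [b [b0 hb] <-].
rewrite -lee_pdivlMl //; apply: ereal_inf_lbound; exists (a^-1 * b)%R; last by rewrite EFinM.
split; first by rewrite mulr_gt0 ?invr_gt0.
apply: ge_ereal_sup => _ [t t0 <-].
apply: le_trans hb; apply: (@le_trans _ _ ((Phi t)%:E * leb_outer [set y | (t < `|w y * h y| / b)%R])); last by apply: ereal_sup_ubound; exists t.
rewrite lee_wpmul2l ?lee_fin ?Phi0 //.
rewrite -[X in X <= _](leb_outer_transl _ x); apply: le_leb_outer => y /=.
move=> /lt_le_trans; apply.
rewrite (_ : (`|v (y - x) * g (y - x)| / (a^-1 * b) = a * `|v (y - x) * g (y - x)| / b)%R); last first.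
  by field; apply/andP; split; rewrite gt_eqF.
by rewrite ler_pM2r ?invr_gt0.
Qed.

End Aux.

Theorem lemma2p5 (R : realType) (n : nat) (u : 'rV[R]_n -> R) (Phi : R -> R) :
  weightU u -> young_fun Phi -> cont_on_nonneg Phi -> Delta2 Phi ->
  (forall (f : 'rV[R]_n -> R) (x : 'rV[R]_n),
     in_wOrlicz Phi u f ->
     in_wOrlicz Phi u (transl x f) /\
     (wOrlicz_norm Phi u (transl x f) <= (u x)%:E * wOrlicz_norm Phi u f)%E) /\
  (forall f : 'rV[R]_n -> R,
     in_wOrlicz Phi u f -> leb_outer [set x | f x != 0] != 0%E ->
     exists C : R, 0 < C /\
       forall x : 'rV[R]_n,
         ((u x / C)%:E <= wOrlicz_norm Phi u (transl x f))%E /\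
         (wOrlicz_norm Phi u (transl x f) <= (C * u x)%:E)%E).
Proof.
move=> hu hY _ _.
have Phi0 : forall t, 0 < t -> 0 <= Phi t.
  by case: hY => P0 _ _ _ _ t /ltW; exact: P0.
have [u0 usub] := hu.
have part1 : forall (f : 'rV[R]_n -> R) (x : 'rV[R]_n),
     in_wOrlicz Phi u f ->
     in_wOrlicz Phi u (transl x f) /\
     (wOrlicz_norm Phi u (transl x f) <= (u x)%:E * wOrlicz_norm Phi u f)%E.
  move=> f x [mf fin]; have hle := norm_transl_le f x hu Phi0.
  split => //; split.
    by move=> t; exact: (leb_measurable_transl x (mf t)).
  apply: le_lt_trans hle _.
  move: fin (wnorm_ge0 Phi u f); case: (wOrlicz_norm Phi u f) => // r _ _.
  by rewrite -EFinM ltry.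
split; first exact: part1.
move=> f hf hne.
pose v := fun z : 'rV[R]_n => (u (- z))^-1.
have v0 : forall z, 0 < v z by move=> z; rewrite invr_gt0.
have cpos := wnorm_pos v0 hY hne.
have Nfin : (wOrlicz_norm Phi u f < +oo)%E by case: hf.
have Npos : (0 < wOrlicz_norm Phi u f)%E by apply: wnorm_pos.
have cmp : forall x, ((u x)%:E * wOrlicz_norm Phi v f <= wOrlicz_norm Phi u (transl x f))%E.
  move=> x; apply: (@norm_cmp _ _ Phi v f u (transl x f) x (u x)) => // y.
  rewrite /transl !normrM (gtr0_norm (v0 _)) (gtr0_norm (u0 y)) mulrA ler_wpM2r //.
  rewrite /v opprB ler_pdivrMr //.
  by have := usub y (x - y); rewrite addrC subrK.
have hu0 : ((u 0)%:E * wOrlicz_norm Phi v f < +oo)%E.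
  apply: le_lt_trans (cmp 0) _; apply: le_lt_trans (part1 f 0 hf).2 _.
  move: Nfin Npos; case: (wOrlicz_norm Phi u f) => // r _ _.
  by rewrite -EFinM ltry.
move: Nfin Npos hu0 cmp cpos (fun x => (part1 f x hf).2).
case: (wOrlicz_norm Phi u f) => // r _; rewrite lte_fin => r0.
case: (wOrlicz_norm Phi v f) => [c _ cmp| |]; first last.
- by [].
- by rewrite gt0_muley ?lte_fin.
rewrite lte_fin => c0 hL.
exists (r + c^-1); split; first by rewrite addr_gt0 ?invr_gt0.
move=> x; have ux0 := u0 x.
move: (cmp x) (hL x) (wnorm_ge0 Phi u (transl x f)).
case: (wOrlicz_norm Phi u (transl x f)) => [l| |]; first last.
- by [].
- by rewrite -EFinM leye_eq.

rewrite -!EFinM !lee_fin => h1 h2 _; split.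
  apply: le_trans h1; rewrite ler_pdivrMr ?addr_gt0 ?invr_gt0 //.
  rewrite mulrDr -(mulrA _ c c^-1) mulfV ?gt_eqF // mulr1 lerDr.
  by apply: mulr_ge0; [apply: mulr_ge0|]; exact: ltW.
apply: le_trans h2 _; rewrite mulrC ler_wpM2r // ?(ltW ux0) //.
by rewrite lerDl invr_ge0 ltW.
Qed.
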